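(* Let $\delta\in(0,1)$, let $X\subset\mathbb{R}_+$ be a Borel set with $0\in X$, and let $x_0>0$. Consider the set of binary environments $\mathcal B_X=\{F_{(z,\sigma)}: z\in X,\ \sigma\in[0,1]\}$. Let $\underline q^*=\frac{1-\delta}{2-\delta}$ and let $\bar q$ be the stationary decision rule with constant stopping probability $\underline q^*$ (it stops with probability $\underline q^*$ after every history in which all alternatives $x_1,\dots,x_t$ equal $0$, and stops with probability $1$ after any history containing a nonzero alternative). Then: (a) $\bar q$ attains the performance ratio $1/2$, i.e. $R_{\bar q}(x_0,\mathcal B_X)=1/2$; (b) if $\sup X=\infty$, then $\bar q$ is dynamically robust for $(x_0,\mathcal B_X)$, i.e. $R_{\bar q}(x_0,\mathcal B_X)=R^*(x_0,\mathcal B_X)$.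
   Context: Sequential search model. Fix a discount factor $\delta\in(0,1)$, a Borel set $X\subset\mathbb{R}_+$ with $0\in X$, and an outside option $x_0>0$. Let $\mathcal F_X$ be the set of Borel probability distributions on $X$ with finite mean (''environments''); a set of feasible environments is any $\mathcal F\subset\mathcal F_X$. A history is $h_t=(x_0,x_1,\dots,x_t)$, $t\ge 0$, $x_i\in X$; its best-so-far alternative is $y_t=\max\{x_0,\dots,x_t\}$; $\mathcal H(x_0)$ is the set of all such histories. A decision rule $p$ assigns to each history $h$ a stopping probability $p(h)\in[0,1]$. Given an environment $F$ and a history $h_t$, the future alternatives $x_{t+1},x_{t+2},\dots$ are i.i.d. with law $F$; at each round $s\ge t$ the individual stops with probability $p(h_s)$ (otherwise she observes the next alternative), and stopping at round $s$ yields $\delta^{s-t}y_s$ (never stopping yields $0$). $U_p(F,h_t)$ is the expected payoff; equivalently $U_p(F,h_t)=p(h_t)y_t+(1-p(h_t))\delta\int U_p(F,(x_0,\dots,x_t,x))\,dF(x)$. $V(F,h)=\sup_p U_p(F,h)$. A prior (mixed environment) is a finitely supported probability distribution $\mu$ on $\mathcal F$; $\Delta(\mathcal F)$ is the set of priors, and each $F\in\mathcal F$ is identified with the prior putting mass one on it. An environment or prior is consistent with $h_t$ if the sequence $x_1,\dots,x_t$ occurs with positive probability under it; $\mathcal F(h)$, $\Delta(\mathcal F(h))$ denote the consistent environments and priors. For $\mu$ consistent with $h$, $U_p(\mu,h)=\sum_F\mu(F\mid h)U_p(F,h)$ with $\mu(\cdot\mid h)$ the Bayesian posterior, and $V(\mu,h)=\sup_pU_p(\mu,h)$.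 The performance ratio is $R_p(x_0,\mathcal F)=\inf_{h\in\mathcal H(x_0)}\inf_{\mu\in\Delta(\mathcal F(h))}U_p(\mu,h)/V(\mu,h)$, the dynamically robust ratio is $R^*(x_0,\mathcal F)=\sup_pR_p(x_0,\mathcal F)$ (supremum over all decision rules), and $p$ is dynamically robust if $R_p(x_0,\mathcal F)=R^*(x_0,\mathcal F)$. A binary environment $F_{(z,\sigma)}$ is the lottery giving value $0$ with probability $1-\sigma$ and value $z$ with probability $\sigma$. *)

(* Defs.v *)
From HB Require Import structures.
From mathcomp Require Import all_boot all_order all_algebra.
From mathcomp Require Import all_classical all_reals all_analysis.
Set Implicit Arguments. Unset Strict Implicit. Unset Printing Implicit Defensive.
Import Order.TTheory GRing.Theory Num.Theory.
Local Open Scope classical_set_scope.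
Local Open Scope ring_scope.

Section SearchModel.
Variable R : realType.

(* A history h_t = (x_0, x_1, ..., x_t) is represented as the pair
   (x_0, [:: x_1; ...; x_t]). *)
Definition history := (R * seq R)%type.

Definition best (h : history) : R := foldr Num.max h.1 h.2.

Definition hext (h : history) (x : R) : history := (h.1, rcons h.2 x).

Definition in_hist (X : set R) (x0 : R) (h : history) : Prop :=
  h.1 = x0 /\ (forall x, x \in h.2 -> X x).

(* A (finitely supported) environment: a lottery given as a list of
   (value, probability) pairs. *)
Definition env := seq (R * R).

Definition binary_env (z sigma : R) : env := [:: (0, 1 - sigma); (z, sigma)].

Definition BX (X : set R) : set env :=
  [set F | exists z sigma, X z /\ 0 <= sigma <= 1 /\ F = binary_env z sigma].

Definition pmass (F : env) (x : R) : R := \sum_(vw <- F | vw.1 == x) vw.2.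

Definition lik (F : env) (h : history) : R := \prod_(x <- h.2) pmass F x.

Definition rule := history -> R.
Definition is_rule (p : rule) : Prop := forall h, 0 <= p h <= 1.

(* stop_term p F n h = E[ (prob. of continuing at rounds t..t+n-1 and
   stopping at round t+n) * y_{t+n} ] given history h_t and environment F. *)
Fixpoint stop_term (p : rule) (F : env) (n : nat) (h : history) : R :=
  match n with
  | 0 => p h * best h
  | n'.+1 => (1 - p h) * \sum_(vw <- F) vw.2 * stop_term p F n' (hext h vw.1)
  end.

(* expected payoff U_p(F,h) = sum_n delta^n * stop_term (never stopping yields 0) *)
Definition Upay (delta : R) (p : rule) (F : env) (h : history) : R :=
  limn (fun N => \sum_(0 <= n < N) delta ^+ n * stop_term p F n h).

(* A prior: finitely supported distribution on environments, as a list of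
   (weight, environment). *)
Definition prior := seq (R * env).

(* mu is in Delta(F(h)) : a probability on Fset whose support consists of
   environments consistent with h. *)
Definition prior_on (Fset : set env) (h : history) (mu : prior) : Prop :=
  (forall e, e \in mu -> [/\ 0 <= e.1, Fset e.2 & 0 < e.1 -> 0 < lik e.2 h])
  /\ \sum_(e <- mu) e.1 = 1.

(* U_p(mu,h) = sum_F mu(F|h) U_p(F,h) with the Bayesian posterior *)
Definition Uprior (delta : R) (p : rule) (mu : prior) (h : history) : R :=
  \sum_(e <- mu)
     (e.1 * lik e.2 h / \sum_(e' <- mu) e'.1 * lik e'.2 h) * Upay delta p e.2 h.

Definition Vprior (delta : R) (mu : prior) (h : history) : R :=
  sup [set Uprior delta p mu h | p in is_rule].

Definition perf_ratio (delta : R) (X : set R) (x0 : R) (Fset : set env)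
    (p : rule) : R :=
  inf [set Uprior delta p hm.2 hm.1 / Vprior delta hm.2 hm.1
        | hm in [set hm : history * prior |
                  in_hist X x0 hm.1 /\ prior_on Fset hm.1 hm.2]].

Definition robust_ratio (delta : R) (X : set R) (x0 : R) (Fset : set env) : R :=
  sup [set perf_ratio delta X x0 Fset p | p in is_rule].

Definition dyn_robust (delta : R) (X : set R) (x0 : R) (Fset : set env)
    (p : rule) : Prop :=
  perf_ratio delta X x0 Fset p = robust_ratio delta X x0 Fset.

Definition qstar (delta : R) : R := (1 - delta) / (2 - delta).
Definition qbar (delta : R) : rule :=
  fun h => if all (fun x => x == 0) h.2 then qstar delta else 1.

End SearchModel.

(* Main.v *)
Require Import Defs.
From HB Require Import structures.
From mathcomp Require Import all_boot all_order all_algebra.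
From mathcomp Require Import all_classical all_reals all_analysis.
From mathcomp Require Import ring lra.
Set Implicit Arguments. Unset Strict Implicit. Unset Printing Implicit Defensive.
Import Order.TTheory GRing.Theory Num.Theory.
Local Open Scope classical_set_scope.
Local Open Scope ring_scope.
Section Pf.
Variable R : realType.
Implicit Types (h : history R) (p : rule R) (F : env R).

Lemma best_hext h x : best (hext h x) = Num.max (best h) x.
Proof.
case: h => a s; rewrite /best /hext /=; elim: s => [|y s IH] /=.
  by rewrite maxC.
by rewrite IH maxA.
Qed.

Lemma best_ge_head h : h.1 <= best h.
Proof.
case: h => a s; rewrite /best /=; elim: s => [|y s IH] //=.
by rewrite le_max IH orbT.
Qed.

Lemma best_ge_mem h x : x \in h.2 -> x <= best h.
Proof.
case: h => a s; rewrite /best /=; elim: s => [|y s IH] //=.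
rewrite inE => /orP [/eqP ->|/IH H]; rewrite le_max ?lexx //.
by rewrite H orbT.
Qed.

Definition T (d : R) p F N h := \sum_(0 <= n < N) d ^+ n * stop_term p F n h.

Lemma UpayE d p F h : Upay d p F h = limn (fun N => T d p F N h).
Proof. by []. Qed.

Lemma T_rec d p F N h : T d p F N.+1 h =
  p h * best h + (1 - p h) * d * \sum_(vw <- F) vw.2 * T d p F N (hext h vw.1).
Proof.
rewrite /T big_nat_recl //= expr0 mul1r; congr (_ + _).
rewrite (eq_bigr (fun i => \sum_(vw <- F) ((1 - p h) * d) * (vw.2 * (d ^+ i * stop_term p F i (hext h vw.1))))); last first.
  move=> i _; rewrite mulr_sumr big_distrr /=; apply: eq_bigr => vw _.
  by rewrite exprS; ring.
rewrite exchange_big /= big_distrr /=; apply: eq_bigr => vw _.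
by rewrite -big_distrr /= -big_distrr.
Qed.

Lemma sum_bin (z s : R) (f : R -> R) :
  \sum_(vw <- binary_env z s) vw.2 * f vw.1 = (1 - s) * f 0 + s * f z.
Proof. by rewrite /binary_env !big_cons big_nil addr0. Qed.

Lemma T_rec_bin d p z s N h : T d p (binary_env z s) N.+1 h =
  p h * best h + (1 - p h) * d * ((1 - s) * T d p (binary_env z s) N (hext h 0)
     + s * T d p (binary_env z s) N (hext h z)).
Proof. by rewrite T_rec (sum_bin z s (fun x => T d p (binary_env z s) N (hext h x))). Qed.

End Pf.
Section Pf2.
Variable R : realType.
Implicit Types (h : history R) (p : rule R) (F : env R).
Variables (d z s : R) (p : rule R).
Hypothesis (hp : is_rule p) (hs : 0 <= s <= 1) (hd : 0 <= d <= 1) (hz : 0 <= z).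
Local Notation F := (binary_env z s).

Lemma st_ge0 n h : 0 <= best h -> 0 <= stop_term p F n h.
Proof.
elim: n h => [|n IH] h bh /=; have [p0 p1] := andP (hp h); first by rewrite mulr_ge0.
rewrite (sum_bin z s (fun x => stop_term p F n (hext h x))).
have [s0 s1] := andP hs.
apply: mulr_ge0; first by rewrite subr_ge0.
apply: addr_ge0; apply: mulr_ge0; rewrite ?subr_ge0 //; apply: IH;
  by rewrite best_hext le_max bh.
Qed.

Lemma T0 h : T d p F 0 h = 0.
Proof. by rewrite /T big_geq. Qed.

Lemma T_mono h : 0 <= best h -> nondecreasing_seq (fun N => T d p F N h).
Proof.
move=> bh; apply/nondecreasing_seqP => N.
rewrite /T big_nat_recr //= lerDl; apply: mulr_ge0; last exact: st_ge0.
by apply: exprn_ge0; case/andP: hd.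
Qed.

Lemma T_ge0 N h : 0 <= best h -> 0 <= T d p F N h.
Proof.
move=> bh; rewrite -(T0 h); exact: (T_mono bh (leq0n N)).
Qed.

Lemma T_le M N h : z <= M -> 0 <= best h <= M -> T d p F N h <= M.
Proof.
move=> zM; elim: N h => [|N IH] h /andP [b0 bM]; first by rewrite T0 (le_trans b0).
have M0 : 0 <= M by exact: le_trans bM.
rewrite T_rec_bin.
have A := IH (hext h 0); have B := IH (hext h z).
rewrite !best_hext in A B.
have {}A : T d p F N (hext h 0) <= M by apply: A; rewrite le_max b0 /= ge_max bM.
have {}B : T d p F N (hext h z) <= M by apply: B; rewrite le_max b0 /= ge_max bM.
have [p0 p1] := andP (hp h); have [s0 s1] := andP hs; have [d0 d1] := andP hd.
have C : (1 - s) * T d p F N (hext h 0) + s * T d p F N (hext h z) <= M by nra.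
have D : d * ((1 - s) * T d p F N (hext h 0) + s * T d p F N (hext h z)) <= M by nra.
nra.
Qed.

Lemma T_cvg h : 0 <= best h -> cvgn (fun N => T d p F N h).
Proof.
move=> bh; apply: nondecreasing_is_cvgn; first exact: T_mono.
exists (Num.max (best h) z) => _ [N _ <-]; apply: T_le; first by rewrite le_max lexx orbT.
by rewrite le_max lexx bh.
Qed.

Lemma Upay_le h V : 0 <= best h -> (forall N, T d p F N h <= V) -> Upay d p F h <= V.
Proof. move=> bh HV; apply: limr_le; [exact: T_cvg | exact: nearW]. Qed.

Lemma Upay_ge h N : 0 <= best h -> T d p F N h <= Upay d p F h.
Proof. move=> bh; apply: (nondecreasing_cvgn_le (T_mono bh) (T_cvg bh)). Qed.

Lemma Upay_ge0 h : 0 <= best h -> 0 <= Upay d p F h.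
Proof. by move=> bh; apply: le_trans (Upay_ge 0 bh); rewrite T0. Qed.

Lemma Upay_bound M h : z <= M -> 0 <= best h <= M -> Upay d p F h <= M.
Proof. by move=> zM /andP [b0 bM]; apply: Upay_le => // N; apply: T_le; rewrite ?b0. Qed.

Lemma Upay_eq h : 0 <= best h -> Upay d p F h =
  p h * best h + (1 - p h) * d * ((1 - s) * Upay d p F (hext h 0) + s * Upay d p F (hext h z)).
Proof.
move=> bh.
have b0 : 0 <= best (hext h 0) by rewrite best_hext le_max bh.
have bz : 0 <= best (hext h z) by rewrite best_hext le_max bh.
have c0 := T_cvg b0; have cz := T_cvg bz; have ch := T_cvg bh.
have H1 : (fun N => T d p F N.+1 h) @ \oo --> (p h * best h + (1 - p h) * d *
   ((1 - s) * Upay d p F (hext h 0) + s * Upay d p F (hext h z))).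
  under eq_fun do rewrite T_rec_bin.
  apply: cvgD; first exact: cvg_cst.
  apply: cvgMl_tmp; apply: cvgD; exact: cvgMl_tmp.
have H2 := ch; rewrite -cvg_shiftS in H2.
exact: (cvg_unique _ H2 H1).
Qed.

End Pf2.
Section Pf3.
Variable R : realType.
Implicit Types (h : history R) (F : env R).

Lemma T_stop d (p : rule R) F N h : p h = 1 -> T d p F N.+1 h = best h.
Proof. by move=> ph; rewrite T_rec ph subrr !mul0r mul1r addr0. Qed.

Variables (d z s : R).
Hypothesis (hs : 0 <= s <= 1) (hd : 0 <= d <= 1) (hz : 0 <= z).
Local Notation F := (binary_env z s).

Lemma Upay_stop (p : rule R) h : is_rule p -> 0 <= best h -> p h = 1 -> Upay d p F h = best h.
Proof.
move=> hp bh ph; rewrite Upay_eq // ph subrr !mul0r mul1r addr0 //.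
Qed.

Lemma T_le2 (p : rule R) y w Vs N h : is_rule p -> 0 <= y -> y <= w -> z <= w -> y <= Vs ->
  d * ((1 - s) * Vs + s * w) <= Vs -> 0 <= best h <= y -> T d p F N h <= Vs.
Proof.
move=> hp y0 yw zw yV dV.
elim: N h => [|N IH] h /andP [b0 by_]; first by rewrite T0 (le_trans y0).
rewrite T_rec_bin.
have A : T d p F N (hext h 0) <= Vs by apply: IH; rewrite best_hext le_max b0 /= ge_max by_ y0.
have B : T d p F N (hext h z) <= w.
  apply: T_le => //; rewrite best_hext le_max b0 /= ge_max zw andbT.
  exact: le_trans yw.
have [p0 p1] := andP (hp h); have [s0 s1] := andP hs; have [d0 d1] := andP hd.
have C : (1 - s) * T d p F N (hext h 0) + s * T d p F N (hext h z) <= (1 - s) * Vs + s * w by nra.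
have D : d * ((1 - s) * T d p F N (hext h 0) + s * T d p F N (hext h z)) <= Vs by nra.
nra.
Qed.

Definition qr (q : R) : rule R := fun h => if all (fun x => x == 0) h.2 then q else 1.

Lemma qr_rule q : 0 <= q <= 1 -> is_rule (qr q).
Proof. by move=> hq h; rewrite /qr; case: ifP => // _; rewrite ler01 lexx. Qed.

Lemma T_qr_inv q N h h' : all (fun x => x == 0) h.2 -> all (fun x => x == 0) h'.2 ->
  best h = best h' -> T d (qr q) F N h = T d (qr q) F N h'.
Proof.
elim: N h h' => [|N IH] h h' a a' bb; first by rewrite !T0.
rewrite !T_rec_bin.
have -> : qr q h = q by rewrite /qr a.
have -> : qr q h' = q by rewrite /qr a'.
rewrite bb.
have -> : T d (qr q) F N (hext h 0) = T d (qr q) F N (hext h' 0).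
  by apply: IH; rewrite ?all_rcons ?eqxx ?a ?a' // !best_hext bb.
have [z0|z0] := eqVneq z 0.
  have -> : hext h z = hext h 0 by rewrite z0.
  have -> : hext h' z = hext h' 0 by rewrite z0.
  have -> // : T d (qr q) F N (hext h 0) = T d (qr q) F N (hext h' 0).
  by apply: IH; rewrite ?all_rcons ?eqxx ?a ?a' // !best_hext bb.
case: N IH => [|N] IH; first by rewrite !T0.
rewrite (@T_stop d (qr q) F N (hext h z)) ?(@T_stop d (qr q) F N (hext h' z)) ?best_hext ?bb //;
  by rewrite /qr /hext /= all_rcons /= (negPf z0).
Qed.

Lemma Upay_qr_inv q h h' : all (fun x => x == 0) h.2 -> all (fun x => x == 0) h'.2 ->
  best h = best h' -> Upay d (qr q) F h = Upay d (qr q) F h'.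
Proof.
move=> a a' bb; rewrite !UpayE.
have E : (fun N => T d (qr q) F N h) = (fun N => T d (qr q) F N h').
  by apply: funext => N; exact: T_qr_inv.
by rewrite E.
Qed.

Lemma Upay_qr q h : 0 <= q <= 1 -> all (fun x => x == 0) h.2 -> 0 <= best h ->
  Upay d (qr q) F h = q * best h + (1 - q) * d *
    ((1 - s) * Upay d (qr q) F h +
      s * (if z == 0 then Upay d (qr q) F h else Num.max (best h) z)).
Proof.
move=> hq a bh; have hp := qr_rule hq.
rewrite {1}Upay_eq //.
have -> : qr q h = q by rewrite /qr a.
have E0 : Upay d (qr q) F (hext h 0) = Upay d (qr q) F h.
  by apply: Upay_qr_inv; rewrite ?all_rcons ?eqxx ?a // best_hext; apply/max_idPl.
rewrite E0.
have [z0|z0] := eqVneq z 0.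
  have -> : hext h z = hext h 0 by rewrite z0.
  by rewrite E0.
rewrite (@Upay_stop (qr q) (hext h z)) ?best_hext // ?le_max ?bh //.
by rewrite /qr /hext /= all_rcons /= (negPf z0).
Qed.

End Pf3.
Section Pf4.
Variable R : realType.
Implicit Types (h : history R) (F : env R).

Lemma qbarE (d : R) : qbar d = qr (qstar d).
Proof. by []. Qed.

Lemma qstar_01 (d : R) : 0 < d < 1 -> 0 <= qstar d <= 1.
Proof.
case/andP=> d0 d1; rewrite /qstar; apply/andP; split.
  by apply: divr_ge0; lra.
by rewrite ler_pdivrMr; lra.
Qed.

Lemma pmass_bin (z s x : R) : pmass (binary_env z s) x =
  (if 0 == x then 1 - s else 0) + (if z == x then s else 0).
Proof.
rewrite /pmass /binary_env !big_cons big_nil /=.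
by case: (0 == x); case: (z == x); rewrite ?addr0 ?add0r.
Qed.

Lemma lik_mem (F : env R) h x : x \in h.2 -> 0 < lik F h -> pmass F x != 0.
Proof.
move=> xin; rewrite /lik (big_rem x xin) /=; apply: contraTneq => ->.
by rewrite mul0r ltxx.
Qed.

Lemma env_main (d : R) (X : set R) x0 z s (p : rule R) h :
  0 < d < 1 -> (forall x, X x -> 0 <= x) -> X z -> 0 <= s <= 1 ->
  in_hist X x0 h -> 0 < x0 -> is_rule p -> 0 < lik (binary_env z s) h ->
  Upay d p (binary_env z s) h <= 2 * Upay d (qbar d) (binary_env z s) h.
Proof.
move=> hd Xpos Xz hs [h1 hX] x0p hp hlik.
have hd' : 0 <= d <= 1 by case/andP: hd => ? ?; apply/andP; split; lra.
have z0 := Xpos _ Xz.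
have hq := qstar_01 hd.
have bh : 0 < best h by apply: lt_le_trans (best_ge_head h); rewrite h1.
have bh' := ltW bh.
rewrite qbarE.
case: (boolP (all (fun x => x == 0) h.2)) => ha; last first.
  case/allPn: ha => x xin /= xnz.
  have zx : z = x.
    apply/eqP; apply: contraTT (lik_mem xin hlik) => zx.
    by rewrite pmass_bin [0 == x]eq_sym (negPf xnz) (negPf zx) addr0 negbK.
  have zb : z <= best h by rewrite zx; exact: best_ge_mem.
  rewrite (Upay_stop z hs hd' (p:=qr (qstar d)) (h:=h)) //; last first.
    by rewrite /qr (negPf (introN allP _)) // => H; move: xnz; rewrite (H x xin).
    exact: qr_rule.
  have := Upay_bound hp hs hd' (M:=best h) (h:=h) zb.
  rewrite lexx bh' => /(_ isT) H; nra.
set q := qstar d; set L := Upay d (qr q) (binary_env z s) h.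
have EL := Upay_qr z hs hd' hq ha bh'.
rewrite -/L in EL.
have L0 : 0 <= L by apply: (Upay_ge0 z (qr_rule hq) hs hd' bh').
set y := best h in EL bh bh' L0 *.
have [d0 d1] := andP hd; have [s0 s1] := andP hs.
case: eqP EL => [zz|/eqP zz] EL.
  have E : (2 - d) * L = (1 - d) * y + d * L.
    by rewrite {1}EL /q /qstar; field; lra.
  have : Upay d p (binary_env z s) h <= y.
    by apply: (Upay_bound hp hs hd') => //; rewrite ?zz ?bh' ?lexx.
  nra.
set w := Num.max y z in EL.
have yw : y <= w by rewrite le_max lexx.
have zw : z <= w by rewrite le_max lexx orbT.
have E : (2 - d) * L = (1 - d) * y + d * ((1 - s) * L + s * w).
  by rewrite {1}EL /q /qstar; field; lra.
have K0 : 0 < 2 - 2 * d + d * s by nra.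
have E2 : (2 - 2 * d + d * s) * L = (1 - d) * y + d * s * w by nra.
apply: (Upay_le hp hs hd') => // N; apply: (T_le2 (z:=z) hs hd' (p:=p) (y:=y) (w:=w) (Vs:=2*L) N) => //.
- have H : 0 <= d * s * (2 * w - y) by apply: mulr_ge0; [apply: mulr_ge0|]; lra.
  have H2 : (2 - 2 * d + d * s) * (2 * L - y) = d * s * (2 * w - y) by nra.
  nra.
- have H : 0 <= 2 * (1 - d + d * s) * (1 - d) * y + d * d * s * s * w.
    apply: addr_ge0; [apply: mulr_ge0; [apply: mulr_ge0|]|]; try nra.
    apply: mulr_ge0; [nra|lra].
  have H2 : (2 - 2 * d + d * s) * (2 * L - d * ((1 - s) * (2 * L) + s * w)) =
     2 * (1 - d + d * s) * (1 - d) * y + d * d * s * s * w by nra.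
  nra.
- by rewrite /y lexx bh'.
Qed.

End Pf4.
Section Pf5.
Variable R : realType.
Implicit Types (h : history R) (mu : prior R).

Definition stopr : rule R := fun _ => 1.
Lemma stopr_rule : is_rule stopr.
Proof. by move=> h; rewrite /stopr lexx ler01. Qed.

Lemma lik_ge0 (z s : R) h : 0 <= s <= 1 -> 0 <= lik (binary_env z s) h.
Proof.
case/andP=> s0 s1; rewrite /lik; apply: prodr_ge0 => x _; rewrite pmass_bin.
by case: ifP; case: ifP => _ _; lra.
Qed.

Lemma mem_prior (X : set R) h mu e : prior_on (BX X) h mu -> e \in mu ->
  [/\ 0 <= e.1, exists z s, [/\ X z, 0 <= s <= 1 & e.2 = binary_env z s]
   & 0 < e.1 -> 0 < lik e.2 h].
Proof.
case=> H _ /H [e0 [z [s [Xz [hs ->]]]] hl]; split => //; by exists z, s.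
Qed.

Lemma D_gt0 (X : set R) h mu : prior_on (BX X) h mu ->
  0 < \sum_(e <- mu) e.1 * lik e.2 h.
Proof.
move=> hmu; have [_ hsum] := hmu.
have ge0 : forall e, e \in mu -> 0 <= e.1 * lik e.2 h.
  move=> e /(mem_prior hmu) [e0 [z [s [_ hs ->]]] _].
  by apply: mulr_ge0 => //; apply: lik_ge0.
rewrite lt_def; apply/andP; split; last first.
  by rewrite big_seq; apply: sumr_ge0 => e; apply: ge0.
apply/negP; rewrite big_seq psumr_eq0; last by move=> e; apply: ge0.
move=> /allP Hall.
case: (boolP (has (fun e => e.1 != 0) mu)) => [/hasP [e emu e1]|/hasPn hn]; last first.
  move: hsum; rewrite big1_seq => [|e /andP [_ emu]]; last first.
    by have := hn e emu; rewrite negbK => /eqP.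
  by move/eqP; rewrite eq_sym oner_eq0.
have [e0 _ hl] := mem_prior hmu emu.
have e1p : 0 < e.1 by rewrite lt_def e1 e0.
have := Hall e emu; rewrite emu /= mulf_eq0 (negPf e1) /= => /eqP l0.
by move: (hl e1p); rewrite l0 ltxx.
Qed.

Lemma Uprior_le (d : R) (X : set R) x0 h mu (p : rule R) :
  0 < d < 1 -> (forall x, X x -> 0 <= x) -> in_hist X x0 h -> 0 < x0 ->
  prior_on (BX X) h mu -> is_rule p ->
  Uprior d p mu h <= 2 * Uprior d (qbar d) mu h.
Proof.
move=> hd Xpos hh x0p hmu hp.
have Dp := D_gt0 hmu.
rewrite /Uprior mulr_sumr [X in X <= _]big_seq [X in _ <= X]big_seq; apply: ler_sum => e emu.
have [e0 [z [s [Xz hs ->]]] hl] := mem_prior hmu emu.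
set D := \sum_(e' <- mu) e'.1 * lik e'.2 h.
have [e1|e1] := eqVneq e.1 0.
  by rewrite e1 !mul0r mulr0.
have e1p : 0 < e.1 by rewrite lt_def e1 e0.
have cge0 : 0 <= e.1 * lik (binary_env z s) h / D.
  by apply: divr_ge0; [apply: mulr_ge0 => //; apply: lik_ge0|exact: ltW].
have := env_main hd Xpos Xz hs hh x0p hp (hl e1p).
move: cge0; set c := _ / D; set a := Upay _ _ _ _; set b := Upay _ _ _ _.
move=> c0 ab; nra.
Qed.

Lemma Uprior_stop (d : R) (X : set R) h mu :
  0 < d < 1 -> 0 <= best h -> prior_on (BX X) h mu -> Uprior d stopr mu h = best h.
Proof.
move=> hd bh hmu.
have hd' : 0 <= d <= 1 by case/andP: hd => ? ?; apply/andP; split; lra.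
have Dp := D_gt0 hmu.
rewrite /Uprior big_seq.
under eq_bigr => e emu.
  have [e0 [z [s [Xz hs E]]] hl] := mem_prior hmu emu.
  rewrite E (Upay_stop z hs hd' stopr_rule bh) // -E.
  over.
rewrite -big_seq -mulr_suml -mulr_suml divff ?mul1r //.
exact: lt0r_neq0.
Qed.

End Pf5.
Arguments stopr {R}.
Section Pf6.
Variable R : realType.
Implicit Types (h : history R) (mu : prior R).

Lemma qbar_rule (d : R) : 0 < d < 1 -> is_rule (qbar d).
Proof. by move=> hd; rewrite qbarE; apply: qr_rule; apply: qstar_01. Qed.

Section Fix.
Variables (d : R) (X : set R) (x0 : R) (h : history R) (mu : prior R).
Hypotheses (hd : 0 < d < 1) (Xpos : forall x, X x -> 0 <= x) (hh : in_hist X x0 h)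
  (x0p : 0 < x0) (hmu : prior_on (BX X) h mu).

Lemma V_le : Vprior d mu h <= 2 * Uprior d (qbar d) mu h.
Proof.
apply: ge_sup; first by exists (Uprior d (qbar d) mu h), (qbar d) => //; exact: qbar_rule.
move=> _ [p hp <-]; exact: (Uprior_le hd Xpos hh x0p hmu hp).
Qed.

Lemma V_ge (p : rule R) : is_rule p -> Uprior d p mu h <= Vprior d mu h.
Proof.
move=> hp; apply: (ub_le_sup); last by exists p.
exists (2 * Uprior d (qbar d) mu h) => _ [p' hp' <-].
exact: (Uprior_le hd Xpos hh x0p hmu hp').
Qed.

Lemma bh_pos : 0 < best h.
Proof. case: hh => h1 _; apply: lt_le_trans (best_ge_head h); by rewrite h1. Qed.

Lemma V_pos : 0 < Vprior d mu h.
Proof.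
have := V_ge (@stopr_rule R); rewrite (Uprior_stop hd (ltW bh_pos) hmu).
by apply: lt_le_trans; exact: bh_pos.
Qed.

Lemma ratio_ge : 2^-1 <= Uprior d (qbar d) mu h / Vprior d mu h.
Proof.
rewrite ler_pdivlMr; last exact: V_pos.
have := V_le; lra.
Qed.

Lemma ratio_ge0 (p : rule R) : is_rule p -> 0 <= Uprior d p mu h / Vprior d mu h.
Proof.
move=> hp; apply: divr_ge0; last exact: ltW V_pos.
rewrite /Uprior big_seq; apply: sumr_ge0 => e emu.
have [e0 [z [s [Xz hs E]]] hl] := mem_prior hmu emu.
have hd' : 0 <= d <= 1 by case/andP: hd => ? ?; apply/andP; split; lra.
apply: mulr_ge0.
  apply: divr_ge0; first by apply: mulr_ge0 => //; rewrite E; apply: lik_ge0.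
  exact: ltW (D_gt0 hmu).
rewrite E; apply: (Upay_ge0 z hp hs hd'); exact: ltW bh_pos.
Qed.

End Fix.

Lemma Uprior_single (d : R) (p : rule R) F h : lik F h != 0 ->
  Uprior d p [:: (1, F)] h = Upay d p F h.
Proof. by
move=> l0; rewrite /Uprior !big_cons !big_nil /= !addr0 mul1r divff // mul1r.
Qed.

Lemma Upay_qbar0 (d : R) h : 0 < d < 1 -> all (fun x => x == 0) h.2 -> 0 <= best h ->
  Upay d (qbar d) (binary_env 0 0) h = best h / 2.
Proof.
move=> hd ha bh.
have hd' : 0 <= d <= 1 by case/andP: hd => ? ?; apply/andP; split; lra.
have hs : 0 <= (0:R) <= 1 by rewrite lexx ler01.
have hq := qstar_01 hd.
rewrite qbarE; have := Upay_qr 0 hs hd' hq ha bh; rewrite eqxx.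
set L := Upay _ _ _ _ => EL.
have E : (2 - d) * L = (1 - d) * best h + d * L.
  by rewrite {1}EL /qstar; field; case/andP: hd => ? ?; lra.
case/andP: hd => ? ?; nra.
Qed.

Lemma part_a (d : R) (X : set R) (x0 : R) : 0 < d < 1 -> (forall x, X x -> 0 <= x) ->
  X 0 -> 0 < x0 -> perf_ratio d X x0 (BX X) (qbar d) = 2^-1.
Proof.
move=> hd Xpos X0 x0p.
have hd' : 0 <= d <= 1 by case/andP: hd => ? ?; apply/andP; split; lra.
set h0 : history R := (x0, [::]).
set mu0 : prior R := [:: (1, binary_env 0 0)].
have l1 : lik (binary_env 0 0) h0 = 1 by rewrite /lik big_nil.
have hh0 : in_hist X x0 h0 by split => // x.
have hmu0 : prior_on (BX X) h0 mu0.
  split; last by rewrite /mu0 big_cons big_nil addr0.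
  move=> e; rewrite inE => /eqP -> /=; split; first exact: ler01.
    by exists 0, 0; split => //; split => //; rewrite lexx ler01.
  by rewrite l1.
have bh0 : best h0 = x0 by [].
have hs : 0 <= (0:R) <= 1 by rewrite lexx ler01.
have Uq : Uprior d (qbar d) mu0 h0 = x0 / 2.
  rewrite Uprior_single; last by rewrite l1 oner_eq0.
  by rewrite Upay_qbar0 // bh0 ltW.
have Vx : Vprior d mu0 h0 = x0.
  apply/eqP; rewrite eq_le; apply/andP; split.
    apply: ge_sup; first by exists (Uprior d stopr mu0 h0), stopr => //; exact: (@stopr_rule R).
    move=> _ [p hp <-]; rewrite Uprior_single; last by rewrite l1 oner_eq0.
    by apply: (Upay_bound hp hs hd') => //; rewrite ?bh0 ?lexx ltW.
  have := V_ge hd Xpos hh0 x0p hmu0 (@stopr_rule R).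
  by rewrite (Uprior_stop hd _ hmu0) // bh0 ltW.
have mem0 : [set Uprior d (qbar d) hm.2 hm.1 / Vprior d hm.2 hm.1
        | hm in [set hm : history R * prior R |
                  in_hist X x0 hm.1 /\ prior_on (BX X) hm.1 hm.2]] 2^-1.
  exists (h0, mu0) => //=; rewrite Uq Vx; field; exact: lt0r_neq0.
have lb : lbound [set Uprior d (qbar d) hm.2 hm.1 / Vprior d hm.2 hm.1
        | hm in [set hm : history R * prior R |
                  in_hist X x0 hm.1 /\ prior_on (BX X) hm.1 hm.2]] 2^-1.
  by move=> _ [[h mu] [hh hmu] <-]; exact: (ratio_ge hd Xpos hh x0p hmu).
apply/eqP; rewrite eq_le; apply/andP; split.
  by apply: (ge_inf _ mem0); exists 2^-1.
by apply: lb_le_inf => //; exists 2^-1.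
Qed.

End Pf6.
Section Pf7.
Variable R : realType.
Implicit Types (h : history R) (mu : prior R).

Lemma exists_pow (d t : R) : 0 < d < 1 -> 0 < t -> exists k, d ^+ k < t.
Proof.
case/andP=> d0 d1 t0.
have H : `|d| < 1 by rewrite ger0_norm ?ltW.
have := @cvgr_lt _ _ _ _ _ _ (cvg_expr H) t t0.
case=> N _ HN; exists N; exact: (HN N (leqnn N)).
Qed.

Definition hz (x0 : R) (t : nat) : history R := iter t (fun h => hext h 0) (x0, [::]).

Lemma hzS x0 t : hz x0 t.+1 = hext (hz x0 t) 0.
Proof. by []. Qed.

Lemma hz_prop x0 t : 0 <= x0 ->
  [/\ (hz x0 t).1 = x0, all (fun x => x == 0) (hz x0 t).2 & best (hz x0 t) = x0].
Proof.
move=> x00; elim: t => [|t [h1 ha hb]] //; rewrite hzS; split => //.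
  by rewrite /hext /= all_rcons eqxx.
by rewrite best_hext hb; apply/max_idPl.
Qed.

Lemma lik_hext (F : env R) h x : lik F (hext h x) = lik F h * pmass F x.
Proof. by rewrite /lik /hext /= -cats1 big_cat big_seq1. Qed.

Lemma lik_hz (F : env R) x0 t : 0 < pmass F 0 -> 0 < lik F (hz x0 t).
Proof.
move=> pm; elim: t => [|t IH]; first by rewrite /lik big_nil ltr01.
by rewrite hzS lik_hext mulr_gt0.
Qed.

Lemma iterb (d a b c e : R) (P be de : nat -> R) :
  0 <= d <= 1 -> 0 <= e -> e <= a -> 0 <= b -> d + d * a + c <= 1 + a ->
  (forall t, 0 <= P t <= 1) ->
  (forall t, be t <= P t + (1 - P t) * (d * be t.+1)) ->
  (forall t, de t <= P t * e + (1 - P t) * (d * de t.+1 + c)) ->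
  (forall t, be t + de t <= 1 + b) ->
  forall k t, be t + de t <= 1 + a + d ^+ k * b.
Proof.
move=> /andP [d0 d1] e0 ea b0 hc hP hbe hde hbase.
elim=> [|k IH] t; first by rewrite expr0 mul1r; have := hbase t; lra.
have := IH t.+1; have := hbe t; have := hde t; have [p0 p1] := andP (hP t).
have dk : 0 <= d ^+ k by apply: exprn_ge0.
have dkb : 0 <= d ^+ k * b by apply: mulr_ge0.
rewrite exprS.
set u := d ^+ k * b in dkb *; rewrite -mulrA -/u.
move=> h1 h2 h3.
have H1 : d * (be t.+1 + de t.+1) <= d * (1 + a + u) by apply: ler_wpM2l.
have du : 0 <= d * u by apply: mulr_ge0.
have H2 : (1 - P t) * (d * (be t.+1 + de t.+1) + c) <= (1 - P t) * (d * (1 + a + u) + c).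
  by apply: ler_wpM2l; lra.
have H3 : P t * (1 + e) <= P t * (1 + a + d * u) by apply: ler_wpM2l; lra.
have H4 : (1 - P t) * (d * (1 + a + u) + c) <= (1 - P t) * (1 + a + d * u).
  by apply: ler_wpM2l; lra.
have E : P t + (1 - P t) * (d * be t.+1) + (P t * e + (1 - P t) * (d * de t.+1 + c)) =
  P t * (1 + e) + (1 - P t) * (d * (be t.+1 + de t.+1) + c) by ring.
have E2 : P t * (1 + a + d * u) + (1 - P t) * (1 + a + d * u) = 1 + a + d * u by ring.
lra.
Qed.

End Pf7.
Section Pf8.
Variable R : realType.

Lemma perf_le (d : R) (X : set R) (x0 : R) (p : rule R) h mu :
  0 < d < 1 -> (forall x, X x -> 0 <= x) -> 0 < x0 -> is_rule p ->
  in_hist X x0 h -> prior_on (BX X) h mu ->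
  perf_ratio d X x0 (BX X) p <= Uprior d p mu h / Vprior d mu h.
Proof.
move=> hd Xpos x0p hp hh hmu.
apply: ge_inf; last by exists (h, mu).
exists 0 => _ [[h' mu'] [hh' hmu'] <-].
exact: (ratio_ge0 hd Xpos hh' x0p hmu' hp).
Qed.

Lemma part_b_le (d : R) (X : set R) (x0 : R) (p : rule R) :
  0 < d < 1 -> (forall x, X x -> 0 <= x) -> X 0 -> 0 < x0 ->
  (forall M : R, exists2 x, X x & M < x) -> is_rule p ->
  perf_ratio d X x0 (BX X) p <= 2^-1.
Proof.
move=> hd Xpos X0 x0p Xunb hp.
have hd' : 0 <= d <= 1 by case/andP: hd => ? ?; apply/andP; split; lra.
have [d0 d1] := andP hd.
set Rr := perf_ratio d X x0 (BX X) p.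
rewrite leNgt; apply/negP => HR.
have hzP t := hz_prop t (ltW x0p).
have hzin t : in_hist X x0 (hz x0 t).
  have [h1 ha _] := hzP t; split => // x xin.
  by move/allP: ha => /(_ x xin) /eqP ->.
have elem : forall t z s, X z -> 0 <= s <= 1 -> 0 < lik (binary_env z s) (hz x0 t) ->
    Rr * Vprior d [:: (1, binary_env z s)] (hz x0 t) <= Upay d p (binary_env z s) (hz x0 t).
  move=> t z s Xz hs hl.
  have hmu : prior_on (BX X) (hz x0 t) [:: (1, binary_env z s)].
    split; last by rewrite big_cons big_nil addr0.
    move=> e; rewrite inE => /eqP -> /=; split; first exact: ler01.
      by exists z, s.
    by move=> _.
  have : Rr <= Uprior d p [:: (1, binary_env z s)] (hz x0 t) /
               Vprior d [:: (1, binary_env z s)] (hz x0 t).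
    exact: (perf_le hd Xpos x0p hp (hzin t) hmu).
  rewrite ler_pdivlMr; last exact: (V_pos hd Xpos (hzin t) x0p hmu).
  by rewrite Uprior_single // lt0r_neq0.
have Rr0 : 0 <= Rr by apply: le_trans (ltW HR); rewrite invr_ge0 ler0n.
set F0 := binary_env (0:R) 0.
have hs0 : 0 <= (0:R) <= 1 by rewrite lexx ler01.
have lik0 t : 0 < lik F0 (hz x0 t).
  by apply: lik_hz; rewrite pmass_bin eqxx subr0 addr0 ltr01.
set B := fun t => Upay d p F0 (hz x0 t).
set P := fun t => p (hz x0 t).
have hP t : 0 <= P t <= 1 by exact: hp.
have bx t : best (hz x0 t) = x0 by have [_ _ ->] := hzP t.
have EB t : B t = P t * x0 + (1 - P t) * d * B t.+1.
  rewrite /B (Upay_eq 0 hp hs0 hd') ?bx ?(ltW x0p) //.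
  by rewrite -hzS subr0 mul1r mul0r addr0.
have B0 t : 0 <= B t by apply: (Upay_ge0 0 hp hs0 hd'); rewrite bx ltW.
have Bx t : B t <= x0.
  by apply: (Upay_bound hp hs0 hd'); rewrite ?bx ?(ltW x0p) ?lexx.
have RB t : Rr * x0 <= B t.
  apply: le_trans (elem t 0 0 X0 hs0 (lik0 t)).
  apply: ler_wpM2l => //.
  have hmu : prior_on (BX X) (hz x0 t) [:: (1, F0)].
    split; last by rewrite big_cons big_nil addr0.
    move=> e; rewrite inE => /eqP -> /=; split; first exact: ler01.
      by exists 0, 0.
    by move=> _.
  have := V_ge hd Xpos (hzin t) x0p hmu (@stopr_rule R).
  by rewrite (Uprior_stop hd _ hmu) ?bx // ltW.
set eps := Rr - 2^-1.
have eps0 : 0 < eps by rewrite subr_gt0.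
set s := eps * (1 - d) / (2 * (1 + eps)).
have s0 : 0 < s by apply: divr_gt0; [apply: mulr_gt0; lra|lra].
have s1 : s < 1 by rewrite ltr_pdivrMr; nra.
have hs : 0 <= s <= 1 by rewrite (ltW s0) (ltW s1).
have ds0 : 0 < d * s by apply: mulr_gt0.
set b := (1 - d + d * s) / (d * s).
have b0 : 0 < b by apply: divr_gt0; nra.
have hk0 : 0 < eps / (2 * b) by apply: divr_gt0; lra.
have [k hk] := exists_pow hd hk0.
have [z Xz hzM] := Xunb (x0 + 2 * x0 * b / eps).
have z_gt : x0 < z.
  apply: le_lt_trans hzM; rewrite lerDl; apply: divr_ge0; last lra.
  by apply: mulr_ge0; [apply: mulr_ge0|]; lra.
have z0 : 0 < z by lra.
set F := binary_env z s.
have likF t : 0 < lik F (hz x0 t).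
  apply: lik_hz; rewrite pmass_bin eqxx (_ : (z == 0) = false) ?addr0; first lra.
  by apply/negbTE; rewrite gt_eqF.
set G := d * s * z / (1 - d + d * s).
have G0 : 0 < G by apply: divr_gt0; [apply: mulr_gt0|]; nra.
set D := fun t => Upay d p F (hz x0 t).
set E := fun t => Upay d p F (hext (hz x0 t) z).
have ED t : D t = P t * x0 + (1 - P t) * d * ((1 - s) * D t.+1 + s * E t).
  by rewrite /D (Upay_eq z hp hs hd') ?bx ?(ltW x0p) // -hzS.
have D0 t : 0 <= D t by apply: (Upay_ge0 z hp hs hd'); rewrite bx ltW.
have Dz t : D t <= z.
  by apply: (Upay_bound hp hs hd'); rewrite ?bx ?(ltW x0p) ?lexx // ltW.
have E0 t : 0 <= E t.
  by apply: (Upay_ge0 z hp hs hd'); rewrite best_hext bx le_max ltW.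
have Ez t : E t <= z.
  apply: (Upay_bound hp hs hd'); rewrite ?lexx //.
  by rewrite best_hext bx le_max (ltW x0p) /= ge_max lexx ltW.
have RD t : Rr * G <= D t.
  apply: le_trans (elem t z s Xz hs (likF t)).
  apply: ler_wpM2l => //.
  have hmu : prior_on (BX X) (hz x0 t) [:: (1, F)].
    split; last by rewrite big_cons big_nil addr0.
    move=> e; rewrite inE => /eqP -> /=; split; first exact: ler01.
      by exists z, s.
    by move=> _.
  have hq : 0 <= (0:R) <= 1 by rewrite lexx ler01.
  have := V_ge hd Xpos (hzin t) x0p hmu (qr_rule hq).
  rewrite Uprior_single; last exact: lt0r_neq0.
  have [_ ha _] := hzP t.
  have bh : 0 <= best (hz x0 t) by rewrite bx ltW.
  have := Upay_qr z hs hd' hq ha bh; rewrite bx.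
  rewrite (_ : (z == 0) = false); last by apply/negbTE; rewrite gt_eqF.
  rewrite (_ : Num.max x0 z = z); last by apply/max_idPr; exact: ltW.
  set L := Upay _ _ _ _ => EL.
  have H : L = d * ((1 - s) * L + s * z) by rewrite {1}EL; ring.
  have EL2 : L * (1 - d + d * s) = d * s * z.
    apply/eqP; rewrite -subr_eq0.
    have -> : L * (1 - d + d * s) - d * s * z = L - d * ((1 - s) * L + s * z) by ring.
    by rewrite {1}H subrr.
  have -> : G = L by rewrite /G -EL2; field; nra.
  done.
set e := x0 / G.
set a := e + d * s / (1 - d).
set c := 1 - d + d * s.
have e0 : 0 <= e by apply: divr_ge0; lra.
have ea : e <= a by rewrite lerDl; apply: divr_ge0; nra.
have hc : d + d * a + c <= 1 + a.
  have : d * s <= (1 - d) * a.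
    rewrite /a mulrDr (mulrC (1 - d) (d * s / (1 - d))) divfK; last lra.
    by rewrite lerDr; apply: mulr_ge0; lra.
  rewrite /c; lra.
have zG : z / G = b by rewrite /G /b; field; nra.
have hbe t : B t / x0 <= P t + (1 - P t) * (d * (B t.+1 / x0)).
  have E1 : B t / x0 = P t + (1 - P t) * (d * (B t.+1 / x0)).
    by rewrite {1}(EB t); field; apply: lt0r_neq0.
  by rewrite E1.
have hde t : D t / G <= P t * e + (1 - P t) * (d * (D t.+1 / G) + c).
  have H1 : D t <= P t * x0 + (1 - P t) * (d * D t.+1 + d * s * z).
    rewrite ED; have [p0 p1] := andP (hP t).
    have : (1 - s) * D t.+1 + s * E t <= D t.+1 + s * z.
      have := D0 t.+1; have := Ez t; nra.
    move=> H; have : d * ((1 - s) * D t.+1 + s * E t) <= d * (D t.+1 + s * z).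
      by apply: ler_wpM2l; lra.
    move=> H'; have : (1 - P t) * (d * ((1 - s) * D t.+1 + s * E t)) <=
       (1 - P t) * (d * (D t.+1 + s * z)) by apply: ler_wpM2l; lra.
    move=> H''; rewrite -mulrA; lra.
  rewrite ler_pdivrMr //; apply: le_trans H1 _.
  have -> : P t * e + (1 - P t) * (d * (D t.+1 / G) + c) =
    (P t * x0 + (1 - P t) * (d * D t.+1 + d * s * z)) / G.
    rewrite /e /c /G; field; nra.
  by rewrite divfK ?lt0r_neq0.
have hbase t : B t / x0 + D t / G <= 1 + b.
  have : B t / x0 <= 1 by rewrite ler_pdivrMr // mul1r.
  have : D t / G <= z / G by rewrite ler_pM2r ?invr_gt0.
  rewrite zG; lra.
have Hit := iterb hd' e0 ea (ltW b0) hc hP hbe hde hbase k 0.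
have R1 : Rr <= B 0 / x0 by rewrite ler_pdivlMr.
have R2 : Rr <= D 0 / G by rewrite ler_pdivlMr.
have h1 : d * s / (1 - d) <= eps / 2.
  rewrite /s ler_pdivrMr; last lra.
  rewrite (_ : d * (eps * (1 - d) / (2 * (1 + eps))) = (1 - d) * (d * eps / (2 * (1 + eps)))); last by field; lra.
  rewrite mulrC ler_pM2r; last lra.
  rewrite ler_pdivrMr; last lra. nra.
have h2 : d ^+ k * b < eps / 2.
  have := hk; rewrite ltr_pdivlMr; last lra.
  move=> H; nra.
have h3 : e < eps / 2.
  have -> : e = x0 * b / z.
    by rewrite /e -zG; field; apply/andP; split; apply: lt0r_neq0.
  rewrite ltr_pdivrMr //.
  have H : 2 * x0 * b / eps < z - x0 by lra.
  have : 2 * x0 * b < (z - x0) * eps by rewrite -ltr_pdivrMr.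
  nra.
move: HR h1 h2 h3 Hit; rewrite /a /eps => HR h1 h2 h3 Hit.
lra.
Qed.

End Pf8.
Theorem theorem1 (R : realType) (delta : R) (X : set R) (x0 : R) :
  0 < delta < 1 ->
  measurable X ->
  (forall x, X x -> 0 <= x) ->
  X 0 ->
  0 < x0 ->
  perf_ratio delta X x0 (BX X) (qbar delta) = 2^-1 /\
  ((forall M : R, exists2 x, X x & M < x) ->
   dyn_robust delta X x0 (BX X) (qbar delta)).
Proof.
move=> hd _ Xpos X0 x0p; split; first exact: part_a.
move=> Xunb; rewrite /dyn_robust (part_a hd Xpos X0 x0p) /robust_ratio.
have mem : [set perf_ratio delta X x0 (BX X) p | p in @is_rule R] 2^-1.
  by exists (qbar delta); [exact: qbar_rule | exact: part_a].
have ub : ubound [set perf_ratio delta X x0 (BX X) p | p in @is_rule R] 2^-1.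
  by move=> _ [p hp <-]; exact: part_b_le.
apply/eqP; rewrite eq_le; apply/andP; split.
  by apply: ub_le_sup => //; exists 2^-1.
by apply: ge_sup => //; exists 2^-1.
Qed.
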